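(* For all integers $m\ge 2$, $n\ge 2$, the state complexity of $L(M)^R\cap L(N)$, where $M$ ranges over complete DFAs with $m$ states and $N$ over complete DFAs with $n$ states (over a common alphabet), is exactly $2^m\cdot n-n+1$: for every such $M,N$ some DFA with at most $2^m\cdot n-n+1$ states accepts $L(M)^R\cap L(N)$, and there exist such $M,N$ for which the minimal complete DFA of $L(M)^R\cap L(N)$ has exactly $2^m\cdot n-n+1$ states.
   Context: DFAs are complete deterministic finite automata; $L(M)$ is the accepted language; $L^R=\{w^R: w\in L\}$ is the reversal of $L$. The state complexity of a regular language is the number of states of its minimal complete DFA; the state complexity of an operation is the maximum state complexity of its result over all argument DFAs of the given sizes. *)

(* Defs.v *)
From mathcomp Require Import all_boot.
Set Implicit Arguments. Unset Strict Implicit. Unset Printing Implicit Defensive.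

Record dfa (A : finType) (n : nat) := DFA {
  dfa_start : 'I_n;
  dfa_final : {set 'I_n};
  dfa_trans : 'I_n -> A -> 'I_n
}.

Definition lang (A : finType) := seq A -> bool.

Definition dfa_run (A : finType) n (M : dfa A n) (q : 'I_n) (w : seq A) : 'I_n :=
  foldl (dfa_trans M) q w.

Definition dfa_accepts (A : finType) n (M : dfa A n) (w : seq A) : bool :=
  dfa_run M (dfa_start M) w \in dfa_final M.

Definition dfa_lang (A : finType) n (M : dfa A n) : lang A := fun w => dfa_accepts M w.

Definition lang_rev (A : finType) (L : lang A) : lang A := fun w => L (rev w).

Definition lang_inter (A : finType) (L1 L2 : lang A) : lang A := fun w => L1 w && L2 w.

Definition recognizes (A : finType) n (D : dfa A n) (L : lang A) : Prop :=
  forall w, dfa_accepts D w = L w.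

Definition state_complexity_is (A : finType) (L : lang A) (k : nat) : Prop :=
  (exists D : dfa A k, recognizes D L) /\
  (forall k' (D : dfa A k'), recognizes D L -> k <= k').

(* Main.v *)
Require Import Defs.
From mathcomp Require Import all_boot.
Set Implicit Arguments. Unset Strict Implicit. Unset Printing Implicit Defensive.

Lemma card_setT (T : finType) : #|{set T}| = 2 ^ #|T|.
Proof. by rewrite -(cardsT {set T}) -powersetT card_powerset cardsT. Qed.

Definition ST (m n : nat) : finType := option ({S : {set 'I_m} | S != set0} * 'I_n)%type.

Lemma card_ST m n : #|ST m n| = 2 ^ m * n - n + 1.
Proof.
rewrite /ST card_option card_prod card_sig card_ord.
have -> : #|[pred x : {set 'I_m} | x != set0]| = 2 ^ m - 1.
  have h : 2 ^ m = #|{set 'I_m}| by rewrite card_setT card_ord.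
  rewrite h subn1 -(cardC1 (set0 : {set 'I_m})).
  by apply: eq_card => x; rewrite !inE.
by rewrite mulnBl mul1n addn1.
Qed.

Definition mk_dfa (A T : finType) (s : T) (f : pred T) (t : T -> A -> T) : dfa A #|T| :=
  DFA (enum_rank s) [set i | f (enum_val i)] (fun i a => enum_rank (t (enum_val i) a)).

Lemma mk_dfa_run (A T : finType) (s : T) (f : pred T) (t : T -> A -> T) (x : T) w :
  dfa_run (mk_dfa s f t) (enum_rank x) w = enum_rank (foldl t x w).
Proof.
elim: w x => [|a w IH] x //=.
by rewrite /dfa_run /= enum_rankK -IH.
Qed.

Lemma mk_dfa_acc (A T : finType) (s : T) (f : pred T) (t : T -> A -> T) w :
  dfa_accepts (mk_dfa s f t) w = f (foldl t s w).
Proof.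
by rewrite /dfa_accepts mk_dfa_run inE enum_rankK.
Qed.

Section Up.
Variables (A : finType) (m n : nat) (M : dfa A m) (N : dfa A n).

Definition up_trans (x : ST m n) (a : A) : ST m n :=
  if x is Some (X, p) then
    omap (fun S' => (S', dfa_trans N p a)) (insub [set q | dfa_trans M q a \in val X])
  else None.
Definition up_start : ST m n :=
  omap (fun S' => (S', dfa_start N)) (insub (dfa_final M)).
Definition up_final (x : ST m n) : bool :=
  if x is Some (X, p) then (dfa_start M \in val X) && (p \in dfa_final N) else false.

Definition Sw (w : seq A) : {set 'I_m} := [set q | dfa_run M q (rev w) \in dfa_final M].

Lemma up_inv w : foldl up_trans up_start w =
  omap (fun S' => (S', dfa_run N (dfa_start N) w)) (insub (Sw w)).
Proof.
elim/last_ind: w => [|w a IH].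
  rewrite /= /up_start; congr omap; congr insub.
  by apply/setP => q; rewrite inE.
rewrite foldl_rcons IH /dfa_run foldl_rcons.
have HS : Sw (rcons w a) = [set q | dfa_trans M q a \in Sw w].
  by apply/setP => q; rewrite !inE /dfa_run rev_rcons.
case: insubP => [S' nz eq|z].
  rewrite /= HS -eq //.
rewrite /= HS; move/negbNE/eqP: z => ->.
rewrite (_ : [set q | dfa_trans M q a \in set0] = set0); last by apply/setP => q; rewrite !inE.
by rewrite insubF ?eqxx.
Qed.

Lemma up_correct w : dfa_accepts (mk_dfa up_start up_final up_trans) w =
  lang_inter (lang_rev (dfa_lang M)) (dfa_lang N) w.
Proof.
rewrite mk_dfa_acc up_inv /lang_inter /lang_rev /dfa_lang /dfa_accepts.
case: insubP => [S' nz eq|z] /=.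
  by rewrite eq inE.
move/negbNE/eqP: z => z.
have : dfa_start M \notin Sw w by rewrite z inE.
by rewrite inE => /negbTE ->.
Qed.
End Up.

Notation Lt m n := ({ffun 'I_m.+2 -> 'I_m.+2} * {ffun 'I_n.+2 -> 'I_n.+2})%type.
Section Low.
Variables (m n : nat).
Definition o1 k : 'I_k.+2 := Ordinal (isT : 1 < k.+2).
Definition Mlow : dfa (Lt m n) m.+2 := DFA ord0 [set ord0] (fun q (a : Lt m n) => a.1 q).
Definition Nlow : dfa (Lt m n) n.+2 := DFA ord0 [set ord0] (fun p (a : Lt m n) => a.2 p).
Definition Llow := lang_inter (lang_rev (dfa_lang Mlow)) (dfa_lang Nlow).
Definition wt (t : ST m.+2 n.+2) : seq (Lt m n) :=
  match t with
  | None => [:: ([ffun _ => o1 m], [ffun _ => ord0])]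
  | Some (X, p) => [:: ([ffun q => if q \in val X then ord0 else o1 m], [ffun _ => p])]
  end.

Lemma Lsig t b : Llow (wt t ++ [:: b]) =
  if t is Some (X, p) then (b.1 ord0 \in val X) && (b.2 p == ord0) else false.
Proof.
case: t => [[X p]|]; rewrite /Llow /lang_inter /lang_rev /dfa_lang /dfa_accepts /dfa_run /=;
  rewrite !inE !ffunE //=.
by case: ifP.
Qed.

Lemma dist t1 t2 : (forall b, Llow (wt t1 ++ [::b]) = Llow (wt t2 ++ [::b])) -> t1 = t2.
Proof.
move=> H.
have pick (X : {S : {set 'I_m.+2} | S != set0}) : exists q, q \in val X.
  by case: X => X /= /set0Pn.
case: t1 H => [[X p]|]; case: t2 => [[Y p']|] // H.
- case: (boolP [exists q, (q \in val X) != (q \in val Y)]).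
    case/existsP => q Hq.
    have := H ([ffun _ => q], [ffun _ => ord0]).
    rewrite !Lsig /= !ffunE eqxx !andbT => E.
    by rewrite E eqxx in Hq.
  rewrite negb_exists => /forallP HXY.
  have eXY : X = Y.
    apply: val_inj; apply/setP => q.
    by have := HXY q; rewrite negbK => /eqP.
  subst Y.
  case: (p =P p') => [-> //|np].
  have [q Hq] := pick X.
  have := H ([ffun _ => q], [ffun x => if x == p then ord0 else o1 n]).
  have np' : (p' == p) = false by apply/eqP => e; apply: np.
  by rewrite !Lsig /= !ffunE eqxx Hq np' /=.
- have [q Hq] := pick X.
  have := H ([ffun _ => q], [ffun _ => ord0]).
  by rewrite !Lsig /= !ffunE eqxx Hq.
- have [q Hq] := pick Y.
  have := H ([ffun _ => q], [ffun _ => ord0]).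
  by rewrite !Lsig /= !ffunE eqxx Hq.
Qed.

Lemma lower k (D : dfa (Lt m n) k) : recognizes D Llow -> #|ST m.+2 n.+2| <= k.
Proof.
move=> HD.
pose h t := dfa_run D (dfa_start D) (wt t).
have inj : injective h.
  move=> t1 t2 eh; apply: dist => b.
  rewrite -!HD /dfa_accepts /dfa_run !foldl_cat.
  by move: eh; rewrite /h /dfa_run => ->.
by have := @leq_card _ _ h inj; rewrite card_ord.
Qed.
End Low.

Theorem theorem12 (m n : nat) (hm : 2 <= m) (hn : 2 <= n) :
  (forall (A : finType) (M : dfa A m) (N : dfa A n),
     exists k, k <= 2 ^ m * n - n + 1 /\
       exists D : dfa A k,
         recognizes D (lang_inter (lang_rev (dfa_lang M)) (dfa_lang N)))
  /\
  (exists (A : finType) (M : dfa A m) (N : dfa A n),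
     state_complexity_is (lang_inter (lang_rev (dfa_lang M)) (dfa_lang N))
                         (2 ^ m * n - n + 1)).
Proof.
split.
  move=> A M N; exists #|ST m n|; split; first by rewrite card_ST.
  exists (mk_dfa (up_start M N) (up_final M N) (up_trans M N)).
  exact: up_correct.
case: m hm => [|[|m]] // _; case: n hn => [|[|n]] // _.
exists (Lt m n : finType), (Mlow m n), (Nlow m n); split.
  rewrite -card_ST.
  exists (mk_dfa (up_start (Mlow m n) (Nlow m n)) (up_final (Mlow m n) (Nlow m n))
            (up_trans (Mlow m n) (Nlow m n))).
  exact: up_correct.
move=> k D HD; rewrite -card_ST; exact: (lower HD).
Qed.
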